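(* Suppose $p\ge q$, $k=k'$, and $\Sigma,\Lambda$ are positive definite. Let $\mu=\mathcal{N}(m_\mu,\Sigma)$ on $\mathbb{R}^p$ and $\nu=\mathcal{N}(m_\nu,\Lambda)$ on $\mathbb{R}^q$. Let $T_{E,F}\in\mathbb{R}^{k\times k}$ be an optimal map for the Gaussian-restricted GW problem between $\mathcal{N}(0,\Sigma_E)$ and $\mathcal{N}(0,\Lambda_F)$ of the form ( * ), and let $T_{E^\perp,F^\perp|E,F}\in\mathbb{R}^{(q-k)\times(p-k)}$ be an optimal map of the form ( * ) for the Gaussian-restricted GW problem between $\mathcal{N}(0,\Sigma/\Sigma_E)$ and $\mathcal{N}(0,\Lambda/\Lambda_F)$. Then $T_{E,F}$ is invertible, and with $$C=\big(\Lambda_{F^\perp F}(T_{E,F}^T)^{-1}-T_{E^\perp,F^\perp|E,F}\Sigma_{E^\perp E}\big)\Sigma_E^{-1},\qquad B=\begin{pmatrix}T_{E,F}&0\\ C&T_{E^\perp,F^\perp|E,F}\end{pmatrix}\in\mathbb{R}^{q\times p},$$ the map $T_{\mathrm{MK}}(x)=m_\nu+B(x-m_\mu)$ satisfies $B\Sigma B^T=\Lambda$ (so $(T_{\mathrm{MK}})_\#\mu=\nu$), and $(\mathrm{Id},T_{\mathrm{MK}})_\#\mu$ is a Monge–Knothe plan for the Gaussian-restricted GW problem: its projection onto $E\times F$ is the optimal plan $(\mathrm{Id},T_{E,F})$ between the centered projections (translated by the means), and for $\mu_E$-a.e. $x_E$ the map $x_{E^\perp}\mapsto (m_\nu)_{F^\perp}+C(x_E-(m_\mu)_E)+T_{E^\perp,F^\perp|E,F}(x_{E^\perp}-(m_\mu)_{E^\perp})$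 pushes the conditional law $\mu_{E^\perp|E}(x_E,\cdot)$ onto the conditional law $\nu_{F^\perp|F}(y_F,\cdot)$ at $y_F=(m_\nu)_F+T_{E,F}(x_E-(m_\mu)_E)$, and coincides, up to translations, with the optimal map $T_{E^\perp,F^\perp|E,F}$ between these conditional laws.
   Context: $E\subset\mathbb{R}^p$ is a $k$-dimensional subspace and $F\subset\mathbb{R}^q$ a $k'$-dimensional subspace. Vectors and matrices are written in orthonormal bases of $E\oplus E^\perp$ and $F\oplus F^\perp$, so $x=(x_E,x_{E^\perp})$, $\Sigma=\begin{pmatrix}\Sigma_E&\Sigma_{EE^\perp}\\ \Sigma_{E^\perp E}&\Sigma_{E^\perp}\end{pmatrix}$ and similarly for $\Lambda$ with blocks $\Lambda_F,\Lambda_{FF^\perp},\Lambda_{F^\perp F},\Lambda_{F^\perp}$. The Schur complement is $\Sigma/\Sigma_E=\Sigma_{E^\perp}-\Sigma_{EE^\perp}^T\Sigma_E^{-1}\Sigma_{EE^\perp}$ (similarly $\Lambda/\Lambda_F$); it is the covariance of the Gaussian conditional law of $x_{E^\perp}$ given $x_E$. The Gaussian-restricted GW problem between Gaussians $\alpha$ on $\mathbb{R}^a$ and $\beta$ on $\mathbb{R}^b$ is $\inf\iint(\|x-x'\|_2^2-\|y-y'\|_2^2)^2\,\mathrm{d}\gamma(x,y)\mathrm{d}\gamma(x',y')$ over couplings $\gamma$ of $\alpha,\beta$ that are Gaussian on $\mathbb{R}^{a+b}$. Form ( * ): for $\alpha=\mathcal{N}(m_\alpha,\Sigma_\alpha)$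 on $\mathbb{R}^a$, $\beta=\mathcal{N}(m_\beta,\Sigma_\beta)$ on $\mathbb{R}^b$ with $a\ge b$, diagonalizations $\Sigma_\alpha=P_\alpha D_\alpha P_\alpha^T$, $\Sigma_\beta=P_\beta D_\beta P_\beta^T$ (eigenvalues in decreasing order), a map of form ( * ) is $T(x)=m_\beta+P_\beta A P_\alpha^T(x-m_\alpha)$ with $A=\begin{pmatrix}\tilde I_b D_\beta^{1/2}(D_\alpha^{(b)})^{-1/2}&0_{b,a-b}\end{pmatrix}$, where $D_\alpha^{(b)}$ is the top-left $b\times b$ block of $D_\alpha$ and $\tilde I_b=\mathrm{diag}((\pm1)_{i\le b})$. (Centered maps of form ( * ) are identified with their matrices.) *)

(* Defs.v *)
From HB Require Import structures.
From mathcomp Require Import all_boot all_order all_algebra.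
Set Implicit Arguments. Unset Strict Implicit. Unset Printing Implicit Defensive.
Import Order.TTheory GRing.Theory Num.Theory.
Local Open Scope ring_scope.

Section Defs.
Variable R : rcfType.

Definition posdef n (M : 'M[R]_n) : Prop :=
  M^T = M /\ forall v : 'cV[R]_n, v != 0 -> 0 < (v^T *m M *m v) ord0 ord0.
Definition psd n (M : 'M[R]_n) : Prop :=
  M^T = M /\ forall v : 'cV[R]_n, 0 <= (v^T *m M *m v) ord0 ord0.

(* Gaussian law N(m, S) on R^n, represented by its parameters *)
Record gauss (n : nat) := Gauss { gmean : 'cV[R]_n ; gcov : 'M[R]_n }.

(* push-forward of N(m,S) by the affine map x |-> c + M x : N(c + M m, M S M^T) *)
Definition gpush n m (c : 'cV[R]_m) (M : 'M[R]_(m, n)) (a : gauss n) : gauss m :=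
  Gauss (c + M *m gmean a) (M *m gcov a *m M^T).

(* the plan (Id, x |-> c + M x)_# a on R^(n+m) *)
Definition plan_of n m (a : gauss n) (c : 'cV[R]_m) (M : 'M[R]_(m, n)) : gauss (n + m) :=
  gpush (col_mx 0 c) (col_mx 1%:M M) a.

Definition gauss_coupling a b (al : gauss a) (be : gauss b) (g : gauss (a + b)) : Prop :=
  psd (gcov g) /\ usubmx (gmean g) = gmean al /\ dsubmx (gmean g) = gmean be /\
  ulsubmx (gcov g) = gcov al /\ drsubmx (gcov g) = gcov be.

(* GW cost  iint (|x-x'|^2 - |y-y'|^2)^2 dg dg  of a Gaussian g on R^(a+b),
   computed in closed form from its covariance (Isserlis' formula) *)
Definition gw_cost a b (g : gauss (a + b)) : R :=
  let G11 := ulsubmx (gcov g) in let G12 := ursubmx (gcov g) in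
  let G22 := drsubmx (gcov g) in
  4 * ((\tr G11) ^+ 2 + 2 * \tr (G11 *m G11) + (\tr G22) ^+ 2 + 2 * \tr (G22 *m G22)
       - 2 * \tr G11 * \tr G22 - 4 * \tr (G12 *m G12^T)).

Definition gw_optimal_plan a b (al : gauss a) (be : gauss b) (g : gauss (a + b)) : Prop :=
  gauss_coupling al be g /\
  forall g' : gauss (a + b), gauss_coupling al be g' -> gw_cost g <= gw_cost g'.

Definition gw_optimal_map a b (al : gauss a) (be : gauss b)
  (c : 'cV[R]_b) (M : 'M[R]_(b, a)) : Prop :=
  gw_optimal_plan al be (plan_of al c M).

(* T (centered, identified with its matrix) is of form ( * ) between N(0,Sa), N(0,Sb) *)
Definition form_star a b (Sa : 'M[R]_a) (Sb : 'M[R]_b) (T : 'M[R]_(b, a)) : Prop :=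
  (b <= a)%N /\
  exists (Pa : 'M[R]_a) (da : 'I_a -> R) (Pb : 'M[R]_b) (db : 'I_b -> R) (s : 'I_b -> R),
    Pa *m Pa^T = 1%:M /\ Pb *m Pb^T = 1%:M /\
        Sa = Pa *m diag_mx (\row_i da i) *m Pa^T /\
        Sb = Pb *m diag_mx (\row_i db i) *m Pb^T /\
        (forall i j : 'I_a, (i <= j)%N -> da j <= da i) /\
        (forall i j : 'I_b, (i <= j)%N -> db j <= db i) /\
        (forall i, s i = 1 \/ s i = -1) /\
        T = Pb *m (\matrix_(i < b, j < a)
                     if (i : nat) == j then s i * Num.sqrt (db i / da j) else 0)
              *m Pa^T.

(* Schur complement S / S_E for S written in the basis E (+) E^perp *)
Definition schur k n (S : 'M[R]_(k + n)) : 'M[R]_n :=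
  drsubmx S - (ursubmx S)^T *m invmx (ulsubmx S) *m ursubmx S.

Definition cond_law k n (m : 'cV[R]_(k + n)) (S : 'M[R]_(k + n)) (xE : 'cV[R]_k) : gauss n :=
  Gauss (dsubmx m + dlsubmx S *m invmx (ulsubmx S) *m (xE - usubmx m)) (schur S).

Definition projEF k p' q' : 'M[R]_(k + k, (k + p') + (k + q')) :=
  block_mx (row_mx 1%:M 0) 0 0 (row_mx 1%:M 0).

End Defs.

(* Main.v *)
Require Import Defs.
From HB Require Import structures.
From mathcomp Require Import all_boot all_order all_algebra ring.
Set Implicit Arguments. Unset Strict Implicit. Unset Printing Implicit Defensive.
Import Order.TTheory GRing.Theory Num.Theory.
Local Open Scope ring_scope.

Section Helpers.
Variable R : rcfType.

Lemma posdef_unit n (M : 'M[R]_n) : posdef M -> M \in unitmx.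
Proof.
case=> Msym Mpos; rewrite unitmxE unitfE; apply/negP => /det0P [v v0 vM].
have := Mpos v^T; rewrite trmx_eq0 v0 => /(_ isT).
by rewrite trmxK vM mul0mx mxE ltxx.
Qed.

Lemma posdef_ul k n (M : 'M[R]_(k + n)) : posdef M -> posdef (ulsubmx M).
Proof.
case=> Msym Mpos; split; first by rewrite trmx_ulsub Msym.
move=> v v0; have := Mpos (col_mx v (0 : 'cV[R]_n)).
have nz : col_mx v (0 : 'cV[R]_n) != 0.
  apply/negP => /eqP h; move/negP: v0; apply; apply/eqP.
  by rewrite -(col_mxKu v (0 : 'cV[R]_n)) h linear0.
rewrite nz; move/(_ isT); rewrite -{1}[M]submxK tr_col_mx mul_row_block mul_row_col.
by rewrite !trmx0 !mul0mx !addr0 mulmx0 addr0.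
Qed.

Lemma posdef_schur k n (M : 'M[R]_(k + n)) : posdef M -> posdef (schur M).
Proof.
move=> PM; have Uu := posdef_unit (posdef_ul PM).
case: PM => Msym Mpos.
have SE : (ulsubmx M)^T = ulsubmx M by rewrite trmx_ulsub Msym.
have SpE : dlsubmx M = (ursubmx M)^T by rewrite trmx_ursub Msym.
have Sp : (drsubmx M)^T = drsubmx M by rewrite trmx_drsub Msym.
split.
  rewrite /schur linearB /= Sp !trmx_mul trmxK trmx_inv SE mulmxA //.
move=> w w0.
set u := - (invmx (ulsubmx M) *m ursubmx M *m w).
have := Mpos (col_mx u w).
have nz : col_mx u w != 0.
  apply/negP => /eqP h; move/negP: w0; apply; apply/eqP.
  by rewrite -(col_mxKd u w) h linear0.
rewrite nz; move/(_ isT); rewrite -{1}[M]submxK tr_col_mx mul_row_block mul_row_col SpE.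
have -> : u^T *m ulsubmx M + w^T *m (ursubmx M)^T = 0.
  rewrite /u linearN /= !trmx_mul trmx_inv SE.
  by rewrite mulNmx -!mulmxA mulVmx // mulmx1 addNr.
rewrite (mul0mx _ u) add0r /schur mulmxDl /u linearN /= !trmx_mul trmx_inv SE.
by rewrite mulmxBr mulmxBl !mulNmx !mulmxA addrC.
Qed.

Lemma col_mulmx m n p (A : 'M[R]_(m, n)) (B : 'M[R]_(n, p)) j :
  col j (A *m B) = A *m col j B.
Proof. by apply/matrixP => i l; rewrite !mxE; apply: eq_bigr => h _; rewrite !mxE. Qed.

Lemma diag_entry n (P X : 'M[R]_n) l :
  (P^T *m X *m P) l l = ((col l P)^T *m X *m col l P) 0 0.
Proof.
have -> : (P^T *m X *m P) l l = row l (col l (P^T *m X *m P)) 0 0 by rewrite !mxE.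
by rewrite col_mulmx !row_mul tr_col.
Qed.

Lemma eig_pos n (P : 'M[R]_n) (d : 'I_n -> R) (S : 'M[R]_n) :
  posdef S -> P *m P^T = 1%:M -> S = P *m diag_mx (\row_i d i) *m P^T ->
  forall l, 0 < d l.
Proof.
move=> [_ Spos] PPt HS l.
have PtP : P^T *m P = 1%:M by apply: mulmx1C.
have D : P^T *m S *m P = diag_mx (\row_i d i).
  by rewrite HS !mulmxA PtP mul1mx -mulmxA PtP mulmx1.
have cl0 : col l P != 0.
  apply/negP => /eqP h; have := diag_entry P 1%:M l.
  by rewrite mulmx1 PtP h mulmx0 !mxE eqxx /= => /eqP; rewrite oner_eq0.
have := Spos _ cl0; rewrite -diag_entry D !mxE eqxx /=.
by rewrite mulr1n.
Qed.

Lemma form_star_cov a b (Sa : 'M[R]_a) (Sb : 'M[R]_b) T :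
  posdef Sa -> posdef Sb -> form_star Sa Sb T -> T *m Sa *m T^T = Sb.
Proof.
move=> PA PB [hba [Pa [da [Pb [db [s [PaO [PbO [HA [HB [_ [_ [Hs HT]]]]]]]]]]]]].
have dapos := eig_pos PA PaO HA; have dbpos := eig_pos PB PbO HB.
have PtP : Pa^T *m Pa = 1%:M by apply: mulmx1C.
set M := \matrix_(i < b, j < a) _ in HT.
have MD : M *m diag_mx (\row_i da i) *m M^T = diag_mx (\row_i db i).
  apply/matrixP => i j; rewrite mul_mx_diag !mxE.
  rewrite (bigD1 (widen_ord hba i)) //= big1 ?addr0; last first.
    move=> l hl; rewrite !mxE (_ : ((i : nat) == l) = false) ?mul0r //.
    apply/negbTE; apply: contra hl => /eqP h; apply/eqP/val_inj => /=.
    by rewrite h.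
  rewrite !mxE /= eqxx.
  case: (eqVneq i j) => [<-|hij].
    rewrite eqxx mulr1n.
    have ss : s i * s i = 1 by case: (Hs i) => ->; rewrite ?mulr1 ?mulrNN ?mulr1.
    set q := Num.sqrt _.
    have -> : s i * q * da (widen_ord hba i) * (s i * q) =
       (s i * s i) * (q ^+ 2) * da (widen_ord hba i) by ring.
    rewrite ss mul1r sqr_sqrtr ?divfK //.
      by apply/lt0r_neq0.
    by apply: divr_ge0; apply/ltW.
  rewrite (_ : ((j : nat) == i) = false) ?mulr0 ?mulr0n //.
  by apply/negbTE; apply: contra hij => /eqP h; apply/eqP/val_inj.
rewrite HT HA HB !trmx_mul !trmxK !mulmxA.
rewrite -(mulmxA _ Pa^T Pa) PtP mulmx1 -(mulmxA _ Pa^T Pa) PtP mulmx1.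
by rewrite -MD !mulmxA.
Qed.

Lemma gw_shift a b (Sa : 'M[R]_a) (Sb : 'M[R]_b) (T : 'M[R]_(b, a)) ma mb c :
  gw_optimal_map (Gauss 0 Sa) (Gauss 0 Sb) 0 T -> mb = c + T *m ma ->
  gw_optimal_map (Gauss ma Sa) (Gauss mb Sb) c T.
Proof.
move=> [[Hpsd [Hu [Hd [Hul Hdr]]]] Hopt] ->.
split.
  split; first exact: Hpsd.
  split; first by rewrite /= mul_col_mx add_col_mx col_mxKu add0r mul1mx.
  split; first by rewrite /= mul_col_mx add_col_mx col_mxKd.
  by split; [exact: Hul | exact: Hdr].
move=> g' [g1 [g2 [g3 [g4 g5]]]].
apply: (Hopt (Gauss 0 (gcov g'))).
by split; [exact: g1 | split; [rewrite /= linear0 | split; [rewrite /= linear0 | split]]].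
Qed.

Lemma unit_of_cov k (T S L : 'M[R]_k) : S \in unitmx -> L \in unitmx ->
  T *m S *m T^T = L -> T \in unitmx.
Proof. by move=> Su Lu E; move: Lu; rewrite -E !unitmx_mul => /andP[/andP[]]. Qed.


Lemma block_alg k p q (SE : 'M[R]_k) (SEp : 'M[R]_(k,p)) (Sp : 'M[R]_p)
  (LF : 'M[R]_k) (LFp : 'M[R]_(k,q)) (Lp : 'M[R]_q) (T : 'M[R]_k) (Tp : 'M[R]_(q,p)) :
  SE \in unitmx -> T \in unitmx -> SE^T = SE -> LF^T = LF -> T *m SE *m T^T = LF ->
  Tp *m (Sp - SEp^T *m invmx SE *m SEp) *m Tp^T = Lp - LFp^T *m invmx LF *m LFp ->
  forall C, C = (LFp^T *m invmx T^T - Tp *m SEp^T) *m invmx SE ->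
  [/\ T *m SE *m C^T + T *m SEp *m Tp^T = LFp,
      (C *m SE + Tp *m SEp^T) *m T^T = LFp^T,
      (C *m SE + Tp *m SEp^T) *m C^T + (C *m SEp + Tp *m Sp) *m Tp^T = Lp &
      C + Tp *m (SEp^T *m invmx SE) = LFp^T *m (invmx LF *m T)].
Proof.
move=> SEu Tu SEs LFs covE covP C Cd.
have TTu : T^T \in unitmx by rewrite unitmx_tr.
have LFu : LF \in unitmx by rewrite -covE !unitmx_mul SEu Tu TTu.
have K : invmx T^T *m invmx SE = invmx LF *m T.
  rewrite -[LHS](mulKmx LFu); congr (_ *m _).
  by rewrite mulmxA -covE mulmxK // mulmxK.
have Ceq : C = LFp^T *m (invmx LF *m T) - Tp *m (SEp^T *m invmx SE).
  by rewrite Cd mulmxBl -!mulmxA K.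
have CSE : C *m SE + Tp *m SEp^T = LFp^T *m invmx T^T.
  by rewrite Cd mulmxKV // subrK.
have CT : C^T = T^T *m (invmx LF *m LFp) - invmx SE *m (SEp *m Tp^T).
  rewrite Ceq linearB /= !trmx_mul trmxK trmx_inv LFs trmx_inv SEs.
  by rewrite trmxK !mulmxA.
have dl : (C *m SE + Tp *m SEp^T) *m T^T = LFp^T by rewrite CSE mulmxKV.
split => //.
- rewrite CT mulmxBr !mulmxA covE mulmxV // mul1mx mulmxK //.
  by rewrite subrK.
- rewrite CSE CT Ceq.
  rewrite mulmxBr mulmxDl mulmxBl -!mulmxA mulKmx //.
  rewrite (mulmxA (invmx T^T) (invmx SE)) K -!mulmxA.
  rewrite mulmxBl -!mulmxA -(subrK (LFp^T *m invmx LF *m LFp) Lp) -covP.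
  rewrite mulmxBr mulmxBl -!mulmxA !addrA subrK.
  by rewrite addrC addrA [RHS]addrAC.
- by rewrite Ceq subrK.
Qed.

Lemma rowE1 k n m (v : 'M[R]_(k + n, m)) :
  row_mx (1%:M : 'M[R]_k) (0 : 'M[R]_(k, n)) *m v = usubmx v.
Proof. by rewrite -{1}[v]vsubmxK mul_row_col mul1mx mul0mx addr0. Qed.

End Helpers.

Theorem proposition3 (R : rcfType) (k p' q' : nat) (hpq : (q' <= p')%N)
  (Sigma : 'M[R]_(k + p')) (Lambda : 'M[R]_(k + q'))
  (mmu : 'cV[R]_(k + p')) (mnu : 'cV[R]_(k + q'))
  (TEF : 'M[R]_k) (Tp : 'M[R]_(q', p')) :
  posdef Sigma -> posdef Lambda ->
  form_star (ulsubmx Sigma) (ulsubmx Lambda) TEF ->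
  gw_optimal_map (Gauss 0 (ulsubmx Sigma)) (Gauss 0 (ulsubmx Lambda)) 0 TEF ->
  form_star (schur Sigma) (schur Lambda) Tp ->
  gw_optimal_map (Gauss 0 (schur Sigma)) (Gauss 0 (schur Lambda)) 0 Tp ->
  let C := (dlsubmx Lambda *m invmx TEF^T - Tp *m dlsubmx Sigma) *m invmx (ulsubmx Sigma) in
  let B : 'M[R]_(k + q', k + p') := block_mx TEF 0 C Tp in
  let mu := Gauss mmu Sigma in
  let nu := Gauss mnu Lambda in
  let muE := Gauss (usubmx mmu) (ulsubmx Sigma) in
  let nuF := Gauss (usubmx mnu) (ulsubmx Lambda) in
  let cEF := usubmx mnu - TEF *m usubmx mmu in
  [/\ TEF \in unitmx,
      B *m Sigma *m B^T = Lambda,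
      gpush (mnu - B *m mmu) B mu = nu,
      (* projection of (Id, T_MK)_# mu onto E x F is the optimal plan (Id, T_EF) *)
      gpush 0 (projEF R k p' q') (plan_of mu (mnu - B *m mmu) B) = plan_of muE cEF TEF
        /\ gw_optimal_map muE nuF cEF TEF &
      (* conditional part *)
      forall xE : 'cV[R]_k,
        let yF := usubmx mnu + TEF *m (xE - usubmx mmu) in
        let c := dsubmx mnu + C *m (xE - usubmx mmu) - Tp *m dsubmx mmu in
        [/\ forall x : 'cV[R]_(k + p'), usubmx x = xE ->
              dsubmx (mnu + B *m (x - mmu))
              = dsubmx mnu + C *m (xE - usubmx mmu) + Tp *m (dsubmx x - dsubmx mmu),
            forall xp : 'cV[R]_p',
              dsubmx mnu + C *m (xE - usubmx mmu) + Tp *m (xp - dsubmx mmu) = c + Tp *m xp,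
            gpush c Tp (cond_law mmu Sigma xE) = cond_law mnu Lambda yF &
            gw_optimal_map (cond_law mmu Sigma xE) (cond_law mnu Lambda yF) c Tp]].

Proof.
move=> PS PL fsE optE fsP optP C B mu nu muE nuF cEF.
have PSE := posdef_ul PS; have PLF := posdef_ul PL.
have PSs := posdef_schur PS; have PLs := posdef_schur PL.
have covE := form_star_cov PSE PLF fsE; have covP := form_star_cov PSs PLs fsP.
have SEu := posdef_unit PSE; have LFu := posdef_unit PLF.
have Tu := unit_of_cov SEu LFu covE.
case: PS => Ssym _; case: PL => Lsym _.
have SEs : (ulsubmx Sigma)^T = ulsubmx Sigma by rewrite trmx_ulsub Ssym.
have LFs : (ulsubmx Lambda)^T = ulsubmx Lambda by rewrite trmx_ulsub Lsym.
have SpE : dlsubmx Sigma = (ursubmx Sigma)^T by rewrite trmx_ursub Ssym.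
have LpF : dlsubmx Lambda = (ursubmx Lambda)^T by rewrite trmx_ursub Lsym.
rewrite /schur in covP.
have Cd : C = ((ursubmx Lambda)^T *m invmx TEF^T - Tp *m (ursubmx Sigma)^T)
               *m invmx (ulsubmx Sigma) by rewrite /C SpE LpF.
have [ur dl dr CK] := block_alg SEu Tu SEs LFs covE covP Cd.
have covB : B *m Sigma *m B^T = Lambda.
  rewrite /B -{1}[Sigma]submxK -[RHS]submxK tr_block_mx !mulmx_block.
  rewrite !mul0mx !addr0 trmx0 !mulmx0 !addr0 SpE LpF.
  by rewrite covE ur dl dr.
have CK2 : C + Tp *m (ursubmx Sigma)^T *m invmx (ulsubmx Sigma) =
    (ursubmx Lambda)^T *m invmx (ulsubmx Lambda) *m TEF by rewrite -!mulmxA CK.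
split => //.
- by rewrite /gpush /= covB subrK.
- split.
    rewrite /gpush /plan_of /projEF /=; congr Gauss.
      rewrite /mu /muE /= add0r (mul_col_mx 1%:M B) mul1mx add_col_mx add0r subrK.
      rewrite mul_block_col !mul0mx addr0 add0r !rowE1 (mul_col_mx 1%:M TEF) mul1mx.
      by rewrite add_col_mx add0r /cEF subrK.
    have PM : projEF R k p' q' *m col_mx 1%:M B = col_mx 1%:M TEF *m row_mx 1%:M 0.
      rewrite /projEF mul_block_col mulmx1 !mul0mx addr0 add0r (mul_col_mx 1%:M TEF) mul1mx.
      rewrite mul_mx_row mulmx1 /B mul_row_block !mul1mx !mul0mx !addr0.
      congr col_mx; congr row_mx; apply/matrixP=> i j; rewrite !mxE big1 // => l _; by rewrite mxE mulr0.
    have rS : row_mx (1%:M : 'M[R]_k) (0 : 'M[R]_(k, p')) *m Sigma *m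
              (row_mx (1%:M : 'M[R]_k) (0 : 'M[R]_(k, p')))^T = ulsubmx Sigma.
      rewrite tr_row_mx trmx1 trmx0 -{1}[Sigma]submxK mul_row_block mul_row_col.
      by rewrite !mul1mx !mul0mx !addr0 mulmx1 mulmx0 addr0.
    rewrite /mu /muE /=; rewrite !mulmxA PM -(mulmxA _ (col_mx 1%:M B)^T) -trmx_mul PM trmx_mul.
    by rewrite -rS !mulmxA.
  rewrite /muE /nuF; apply: (gw_shift optE); by rewrite /cEF subrK.
move=> xE yF c.
have yFe : yF - usubmx mnu = TEF *m (xE - usubmx mmu) by rewrite /yF addrC addKr.
have mean : dsubmx mnu + dlsubmx Lambda *m invmx (ulsubmx Lambda) *m (yF - usubmx mnu)
   = c + Tp *m (dsubmx mmu + dlsubmx Sigma *m invmx (ulsubmx Sigma) *m (xE - usubmx mmu)).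
  rewrite yFe /c SpE LpF [Tp *m (_ + _)]mulmxDr [RHS]addrA subrK -[RHS]addrA.
  rewrite (mulmxA Tp) -mulmxDl CK.
  by rewrite !mulmxA.
split.
- move=> x hx; rewrite /B -[x - mmu]vsubmxK mul_block_col -{1}[mnu]vsubmxK.
  rewrite add_col_mx col_mxKd [usubmx (x - mmu)]linearB [dsubmx (x - mmu)]linearB /=.
  by rewrite hx addrA.
- by move=> xp; rewrite /c [Tp *m (xp - _)]mulmxBr addrA addrAC.
- have covP2 : Tp *m schur Sigma *m Tp^T = schur Lambda := covP.
  by rewrite /gpush /cond_law /= -mean covP2.
rewrite /cond_law; apply: (gw_shift optP); exact: mean.
Qed.
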